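(* For every integer $r \ge 2$ there exists an integer $N = N(r)$ such that for every integer $n \ge N$ there exists a graph $G=(V,E)$ with (i) $|V| = 7rn$; (ii) $500(\log r) r^2 n < |E| < 600 (\log r) r^2 n$; (iii) for every two disjoint sets $S, T \subseteq V$ with $|S| = |T| = n$, the number of edges of $G$ with both endpoints in $S \cup T$ and at least one endpoint in $S$ is at most $70 (\log r) n$.
   Context: $\log$ denotes the natural logarithm. *)

(* Defs.v *)
From mathcomp Require Import all_boot.
From Stdlib Require Import Reals.

Set Implicit Arguments. Unset Strict Implicit. Unset Printing Implicit Defensive.

(* A finite simple graph on vertex type V is given by its edge set E,
   a set of 2-element subsets of V. *)
Definition simple_edges (V : finType) (E : {set {set V}}) : Prop :=
  forall e, e \in E -> #|e| = 2%N.

Definition edges_ST (V : finType) (E : {set {set V}}) (S T : {set V}) : {set {set V}} :=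
  [set e in E | (e \subset S :|: T) && (e :&: S != set0)].

(* Main.v *)
Require Import Defs.
From mathcomp Require Import all_boot all_algebra.
From mathcomp Require Import Rstruct.
From Stdlib Require Import Reals Lra Lia Psatz.
Import order.Order.TTheory GRing.Theory Num.Theory.
Set Implicit Arguments. Unset Strict Implicit.
Set Implicit Arguments. Unset Strict Implicit.
Definition AST (V : finType) (S T : {set V}) : {set {set V}} :=
  [set e : {set V} | [&& #|e| == 2, e \subset S :|: T & e :&: S != set0]].

Lemma card_AST (V : finType) (S T : {set V}) :
  #|AST S T| <= 'C(#|S|, 2) + #|S| * #|T|.
Proof.
pose f := fun st : V * V => [set st.1; st.2].
have sub : AST S T \subset [set A : {set V} | A \subset S & #|A| == 2] :|: f @: setX S T.
  apply/subsetP => e; rewrite /AST !inE => /and3P [/cards2P [x [y [nxy ->]]] sST nS].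
  have hx : x \in S :|: T by apply: (subsetP sST); rewrite !inE eqxx.
  have hy : y \in S :|: T by apply: (subsetP sST); rewrite !inE eqxx orbT.
  move: hx hy; rewrite !inE => hx hy.
  case xS: (x \in S); case yS: (y \in S).
  - apply/orP; left; rewrite cards2 nxy andbT.
    by apply/subsetP => z; rewrite !inE => /orP [] /eqP ->.
  - apply/orP; right; apply/imsetP; exists (x, y) => //.
    by rewrite !inE xS /=; move: hy; rewrite yS.
  - apply/orP; right; apply/imsetP; exists (y, x); last by rewrite /f /= setUC.
    by rewrite !inE yS /=; move: hx; rewrite xS.
  - by case/set0Pn: nS => z; rewrite !inE => /andP [/orP [] /eqP ->]; rewrite ?xS ?yS.
rewrite (leq_trans (subset_leq_card sub)) // cardsU.
rewrite (leq_trans (leq_subr _ _)) // cards_draws leq_add2l.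
by rewrite (leq_trans (leq_imset_card _ _)) // cardsX.
Qed.

Lemma powE (n m : nat) : Nat.pow n m = expn n m.
Proof. elim: m => [|m IH] //=; by rewrite expnS -IH. Qed.

Lemma ffact_le_exp n m : n ^_ m <= expn n m.
Proof.
elim: m => [|m IH]; first by rewrite ffactn0 expn0.
by rewrite ffactnSr expnSr leq_mul // leq_subr.
Qed.
Open Scope R_scope.

Lemma ln_le_sub1 x : 0 < x -> ln x <= x - 1.
Proof. move=> hx; have := exp_ineq1_le (ln x); rewrite exp_ln //; lra. Qed.

Lemma ln_ge_1inv x : 0 < x -> 1 - / x <= ln x.
Proof.
move=> hx; have h := ln_le_sub1 (Rinv_0_lt_compat _ hx).
rewrite ln_Rinv // in h; lra.
Qed.

Lemma ln_le' x y : 0 < x -> x <= y -> ln x <= ln y.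
Proof.
move=> hx [h|->]; last by right.
by left; apply: ln_increasing.
Qed.

Lemma exp_pow_n x n : exp x ^ n = exp (INR n * x).
Proof.
elim: n => [|n IH]; first by rewrite /= Rmult_0_l exp_0.
by rewrite -tech_pow_Rmult IH -exp_plus S_INR; congr exp; ring.
Qed.

Lemma exp1_le : exp 1 <= 2.8.
Proof.
have h : (1 - /20) ^ 20 <= exp (-1).
  have -> : -1 = INR 20 * (- / 20) by simpl; field.
  rewrite -exp_pow_n; apply: pow_incr; split; first lra.
  have := exp_ineq1_le (- / 20); lra.
have e1 : exp (-1) * exp 1 = 1 by rewrite -exp_plus Rplus_opp_l exp_0.
have hp : 0 < exp 1 by apply: exp_pos.
have h2 : 1/2.8 <= (1 - /20) ^ 20 by simpl; lra.
nra.
Qed.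

Lemma exp1_ge : (1 + /20) ^ 20 <= exp 1.
Proof.
have -> : exp 1 = exp (INR 20 * (/ 20)) by congr exp; simpl; field.
rewrite -exp_pow_n; apply: pow_incr; split; first lra.
have := exp_ineq1_le (/ 20); lra.
Qed.

Lemma ln2_ge : 2/3 <= ln 2.
Proof.
have h1 := exp1_le.
have hp : 0 < exp (2/3) by apply: exp_pos.
have h3 : exp (2/3) ^ 3 <= 8.
  rewrite exp_pow_n; have -> : INR 3 * (2/3) = 1 + 1 by simpl; field.
  rewrite exp_plus; have := exp_pos 1; nra.
have h4 : exp (2/3) <= 2.
  apply: Rnot_lt_le => hc; simpl in h3; nra.
rewrite -(ln_exp (2/3)); apply: ln_le' => //.
Qed.

Lemma ln7_le : ln 7 <= 2.
Proof.
have h1 := exp1_ge.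
have h2 : 7 <= exp 1 * exp 1 by simpl in h1; nra.
rewrite -(ln_exp 2); apply: ln_le'; first lra.
have -> : 2 = 1 + 1 by ring.
by rewrite exp_plus.
Qed.

Lemma INR_muln (a b : nat) : INR (muln a b) = INR a * INR b.
Proof. by rewrite -mult_INR. Qed.
Lemma INR_addn (a b : nat) : INR (addn a b) = INR a + INR b.
Proof. by rewrite -plus_INR. Qed.

Lemma succ_pow_le n : INR n.+1 ^ n <= exp 1 * INR n ^ n.
Proof.
case: n => [|n]; first by simpl; have := exp_ineq1_le 1; lra.
set m := n.+1.
have hm : 0 < INR m by apply: lt_0_INR; rewrite /m; lia.
have h1 : INR m.+1 <= INR m * exp (/ INR m).
  rewrite S_INR; have := exp_ineq1_le (/ INR m).
  have : INR m * (1 + / INR m) = INR m + 1 by field; lra.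
  move=> e h; rewrite -e; apply: Rmult_le_compat_l; lra.
apply: (Rle_trans _ ((INR m * exp (/ INR m)) ^ m)).
  apply: pow_incr; split => //; apply: pos_INR.
rewrite Rpow_mult_distr exp_pow_n Rinv_r; last lra.
rewrite Rmult_comm; lra.
Qed.

Lemma fact_bound n : INR n ^ n <= exp (INR n) * INR (n`!).
Proof.
elim: n => [|n IH]; first by simpl; rewrite exp_0; lra.
rewrite factS INR_muln -tech_pow_Rmult S_INR exp_plus -S_INR.
have h := succ_pow_le n.
have p1 : 0 <= INR n.+1 by apply: pos_INR.
have p2 : 0 <= exp 1 by left; apply: exp_pos.
apply: (Rle_trans _ (INR n.+1 * (exp 1 * INR n ^ n))).
  by apply: Rmult_le_compat_l.
have := Rmult_le_compat_l _ _ _ p2 IH.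
have := Rmult_le_compat_l _ _ _ p1 (Rmult_le_compat_l _ _ _ p2 IH).
nra.
Qed.

Lemma binom_bound (N k : nat) : (0 < k)%nat ->
  INR 'C(N, k) <= (exp 1 * INR N / INR k) ^ k.
Proof.
move=> k0.
have hk : 0 < INR k by apply: lt_0_INR; apply/ssrnat.ltP.
have h1 : INR 'C(N, k) * INR (k`!) <= INR N ^ k.
  rewrite -INR_muln bin_ffact -pow_INR powE; apply: le_INR; apply/ssrnat.leP.
  exact: ffact_le_exp.
have h2 := fact_bound k.
have hf : 0 < INR (k`!) by apply: lt_0_INR; apply/ssrnat.ltP; apply: fact_gt0.
have hkk : 0 < INR k ^ k by apply: pow_lt.
rewrite Rpow_mult_distr Rpow_mult_distr exp_pow_n Rmult_1_r pow_inv.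
apply: (Rmult_le_reg_r (INR k ^ k)) => //.
rewrite Rmult_assoc Rinv_l; last lra.
apply: (Rmult_le_reg_r (INR (k`!))) => //.
have hC : 0 <= INR 'C(N, k) by apply: pos_INR.
have hN : 0 <= INR N ^ k by apply: pow_le; apply: pos_INR.
nra.
Qed.

Section Gen.
Local Open Scope ring_scope.
Lemma gen (X : finType) (q : X -> R) (A : {set X}) (x : R) :
  \sum_(f : {ffun X -> bool})
     (\prod_e (if f e then q e else 1 - q e)) * x ^+ #|[set e in A | f e]|
  = \prod_e (if e \in A then q e * x + (1 - q e) else 1).
Proof.
pose H := fun e (b : bool) => (if b then q e else 1 - q e) * (if (e \in A) && b then x else 1).
rewrite (eq_bigr (fun f : {ffun X -> bool} => \prod_e H e (f e))); last first.
  move=> f _; rewrite /H big_split /=; congr (_ * _).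
  rewrite -big_mkcond /= -prodr_const; apply: eq_bigl => e; by rewrite inE.
rewrite -(bigA_distr_bigA H) /=.
apply: eq_bigr => e _; rewrite big_bool /H /=.
rewrite andbT andbF mulr1; case: (e \in A) => /=; [by [] | by rewrite mulr1 addrC subrK].
Qed.
End Gen.

Section Defs2.
Local Open Scope ring_scope.
Definition qq (V : finType) (p : R) (e : {set V}) : R := if #|e| == 2%nat then p else 0.
Definition ww (V : finType) (p : R) (f : {ffun {set V} -> bool}) : R :=
  \prod_e (if f e then qq p e else 1 - qq p e).
Definition cnt (V : finType) (f : {ffun {set V} -> bool}) (A : {set {set V}}) : nat :=
  #|[set e in A | f e]|.
Definition A2 (V : finType) : {set {set V}} := [set e : {set V} | #|e| == 2%nat].

Lemma genA (V : finType) (p : R) (A : {set {set V}}) (x : R) :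
  (forall e, e \in A -> #|e| == 2%nat) ->
  \sum_(f : {ffun {set V} -> bool}) ww p f * pow x (cnt f A) =
    pow (Rplus 1 (Rmult p (Rminus x 1))) #|A|.
Proof.
move=> hA.
under eq_bigr => f _ do rewrite RpowE.
rewrite /ww /cnt gen RpowE -big_mkcond /= -prodr_const.
apply: eq_bigr => e eA; rewrite /qq (hA e eA).
change (Rplus (Rmult p x) (Rplus 1 (Ropp p)) = 1 + p * (x - 1))%R; ring.
Qed.
End Defs2.

Section WW.
Local Open Scope ring_scope.
Lemma ww_ge0 (V : finType) (p : R) (f : {ffun {set V} -> bool}) :
  0 <= p <= 1 -> 0 <= ww p f.
Proof.
move=> /andP [p0 p1]; apply: prodr_ge0 => e _; rewrite /qq.
case: (f e); case: (#|e| == 2%nat) => //; by rewrite subr_ge0.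
Qed.

Lemma ww_sum1 (V : finType) (p : R) :
  \sum_(f : {ffun {set V} -> bool}) ww p f = 1.
Proof.
have h0 : forall e : {set V}, e \in (set0 : {set {set V}}) -> #|e| == 2%nat by move=> e; rewrite inE.
transitivity (\sum_(f : {ffun {set V} -> bool}) ww p f * pow 1 (cnt f set0)).
  by apply: eq_bigr => f _; rewrite pow1 mulr1.
by rewrite (@genA V p set0 1 h0) cards0.
Qed.

Lemma ww_supp (V : finType) (p : R) (f : {ffun {set V} -> bool}) e :
  ww p f != 0 -> f e -> #|e| == 2%nat.
Proof.
move=> nz fe; apply/negPn/negP => he; move: nz; rewrite /ww (bigD1 e) //= fe /qq.
by rewrite (negbTE he) mul0r eqxx.
Qed.

Lemma sum_phi (V : finType) (p : R) (KS : {set {set V}}) (B : {set V} -> {set V} -> {set {set V}})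
  (c1 c2 c3 x1 x2 x3 : R) (A : {set {set V}}) :
  (forall S T e, e \in B S T -> #|e| == 2%nat) -> (forall e, e \in A -> #|e| == 2%nat) ->
  \sum_(f : {ffun {set V} -> bool}) ww p f *
     (\sum_(S in KS) \sum_(T in KS) (c1 * pow x1 (cnt f (B S T)))
      + c2 * pow x2 (cnt f A) + c3 * pow x3 (cnt f A))
  = \sum_(S in KS) \sum_(T in KS) (c1 * pow (Rplus 1 (Rmult p (Rminus x1 1))) #|B S T|)
      + c2 * pow (Rplus 1 (Rmult p (Rminus x2 1))) #|A|
      + c3 * pow (Rplus 1 (Rmult p (Rminus x3 1))) #|A|.
Proof.
move=> hB hA.
under eq_bigr => f _ do rewrite !mulrDr.
rewrite !big_split /=; congr (_ + _ + _).
- under eq_bigr => f _ do rewrite mulr_sumr.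
  rewrite exchange_big /=; apply: eq_bigr => S _.
  under eq_bigr => f _ do rewrite mulr_sumr.
  rewrite exchange_big /=; apply: eq_bigr => T _.
  rewrite -(genA p x1 (hB S T)) mulr_sumr; apply: eq_bigr => f _.
  by rewrite mulrCA.
- rewrite -(genA p x2 hA) mulr_sumr; apply: eq_bigr => f _; by rewrite mulrCA.
- rewrite -(genA p x3 hA) mulr_sumr; apply: eq_bigr => f _; by rewrite mulrCA.
Qed.
End WW.

Lemma ind_le (x K : R) (c : nat) : 0 < x -> 0 <= (INR c - K) * ln x ->
  1 <= pow x c * exp (-(K * ln x)).
Proof.
move=> hx h; rewrite -{1}(exp_ln x hx) exp_pow_n -exp_plus.
have := exp_ineq1_le (INR c * ln x + - (K * ln x)); nra.
Qed.

Lemma pow_exp_le (a : R) (m : nat) : 0 <= 1 + a -> pow (1 + a) m <= exp (a * INR m).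
Proof.
move=> h; apply: (Rle_trans _ (exp a ^ m)).
  apply: pow_incr; split => //; have := exp_ineq1_le a; lra.
by rewrite exp_pow_n Rmult_comm; right.
Qed.

Lemma exp_mono x y : x <= y -> exp x <= exp y.
Proof. move=> [h|->]; [left; exact: exp_increasing | by right]. Qed.

Lemma T1 (nn L p : R) (a : nat) : 0 < nn -> 0 <= L -> p = 22 * L / nn ->
  INR a <= 1.5 * nn ^ 2 ->
  exp (-(70 * L * nn * ln 2)) * pow (1 + p * (2 - 1)) a
  <= exp (33 * L * nn - 70 * L * nn * ln 2).
Proof.
move=> hn hL hp ha.
have p0 : 0 <= p by rewrite hp; apply: Rmult_le_pos; [lra | left; apply: Rinv_0_lt_compat].
have h1 := @pow_exp_le (p * (2 - 1)) a ltac:(nra).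
have h2 : p * (2 - 1) * INR a <= 33 * L * nn.
  have -> : p * (2 - 1) * INR a = 22 * L * (INR a / nn) by rewrite hp; field; lra.
  have : INR a / nn <= 1.5 * nn.
    apply: (Rmult_le_reg_r nn) => //. rewrite /Rdiv Rmult_assoc Rinv_l; lra.
  nra.
have h3 := exp_mono h2.
have e0 := exp_pos (-(70 * L * nn * ln 2)).
apply: (Rle_trans _ (exp (-(70 * L * nn * ln 2)) * exp (33 * L * nn))).
  apply: Rmult_le_compat_l; [lra | lra].
rewrite -exp_plus; right; congr exp; ring.
Qed.

Lemma T1sum (nn L C : R) : 0 <= C -> C <= exp (nn * (ln 7 + 1 + L)) -> 2/3 <= L -> 0 < nn ->
  C * C * exp (33 * L * nn - 70 * L * nn * ln 2) <= exp (- nn).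
Proof.
move=> c0 hC hL hn.
have e1 := exp_pos (nn * (ln 7 + 1 + L)).
have e2 := exp_pos (33 * L * nn - 70 * L * nn * ln 2).
apply: (Rle_trans _ (exp (nn * (ln 7 + 1 + L)) * exp (nn * (ln 7 + 1 + L))
   * exp (33 * L * nn - 70 * L * nn * ln 2))).
  apply: Rmult_le_compat_r; [lra | nra].
rewrite -!exp_plus; apply: exp_mono.
have l7 := ln7_le. have l2 := ln2_ge.
have : 0 <= L * (ln 2 - 2/3) by nra.
nra.
Qed.

Lemma T2 (rr nn L p : R) (m : nat) : 2 <= rr -> 0 < nn -> 2/3 <= L -> p = 22 * L / nn ->
  2 * INR m <= (7 * rr * nn) ^ 2 ->
  exp (-(600 * L * rr ^ 2 * nn * ln (21/20))) * pow (1 + p * (21/20 - 1)) m <= exp (- nn).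
Proof.
move=> hr hn hL hp hm.
have p0 : 0 <= p by rewrite hp; apply: Rmult_le_pos; [lra | left; apply: Rinv_0_lt_compat].
have h1 := @pow_exp_le (p * (21/20 - 1)) m ltac:(nra).
have l21 : 1/21 <= ln (21/20).
  have := @ln_ge_1inv (21/20) ltac:(lra). have -> : / (21/20) = 20/21 by field. lra.
set X := L * rr ^ 2 * nn.
have hX : 8/3 * nn <= X.
  rewrite /X; have : 4 <= rr ^ 2 by nra. move=> h4.
  have : 8/3 <= L * rr ^ 2 by nra. nra.
have h2 : p * (21/20 - 1) * INR m <= 26.95 * X.
  have -> : p * (21/20 - 1) * INR m = 22 * L / 20 * (INR m / nn) by rewrite hp; field; lra.
  have : INR m / nn <= 49 / 2 * rr ^ 2 * nn.
    apply: (Rmult_le_reg_r nn) => //. rewrite /Rdiv Rmult_assoc Rinv_l; [nra | lra].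
  rewrite /X; have : 0 <= L by lra. nra.
have h3 : 600 / 21 * X <= 600 * L * rr ^ 2 * nn * ln (21 / 20).
  rewrite /X; have : 0 <= L * rr ^ 2 * nn by rewrite -/X; lra. nra.
have e0 := exp_pos (-(600 * L * rr ^ 2 * nn * ln (21/20))).
apply: (Rle_trans _ (exp (-(600 * L * rr ^ 2 * nn * ln (21/20))) * exp (p * (21 / 20 - 1) * INR m))).
  apply: Rmult_le_compat_l; lra.
rewrite -exp_plus; apply: exp_mono; lra.
Qed.

Lemma T3 (rr nn L p : R) (m : nat) : 2 <= rr -> 22 * rr <= nn -> 2/3 <= L -> p = 22 * L / nn ->
  0 <= p <= 1 ->
  2 * INR m = (7 * rr * nn) * (7 * rr * nn - 1) ->
  exp (-(500 * L * rr ^ 2 * nn * ln (49/50))) * pow (1 + p * (49/50 - 1)) m <= exp (- nn).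
Proof.
move=> hr hn hL hp hp01 hm.
have h1 := @pow_exp_le (p * (49/50 - 1)) m ltac:(nra).
have l49 : - ln (49/50) <= 1/49.
  rewrite -ln_Rinv; last lra. have := @ln_le_sub1 (/ (49/50)) ltac:(apply: Rinv_0_lt_compat; lra).
  have -> : / (49/50) = 50/49 by field. lra.
have hpm : p * INR m = 77 * L * rr * (7 * rr * nn - 1).
  have -> : p * INR m = 11 * L / nn * (2 * INR m) by rewrite hp; field; lra.
  rewrite hm; field; lra.
have hX : nn <= L * rr * (0.5759 * rr * nn - 1.54).
  have a1 : 0.5 * rr * nn <= 0.5759 * rr * nn - 1.54 by nra.
  have a2 : 4/3 <= L * rr by nra.
  have a3 : 0 <= L * rr by nra.
  have a4 : L * rr * (0.5 * rr * nn) <= L * rr * (0.5759 * rr * nn - 1.54).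
    by apply: Rmult_le_compat_l.
  nra.
have h3 : - (500 * L * rr ^ 2 * nn * ln (49 / 50)) <= 500 / 49 * (L * rr ^ 2 * nn).
  have q1 : 0 <= rr ^ 2 by nra.
  have q2 : 0 <= L * rr ^ 2 * nn by apply: Rmult_le_pos; [apply: Rmult_le_pos|]; lra.
  nra.
have e0 := exp_pos (-(500 * L * rr ^ 2 * nn * ln (49/50))).
apply: (Rle_trans _ (exp (-(500 * L * rr ^ 2 * nn * ln (49/50))) * exp (p * (49 / 50 - 1) * INR m))).
  apply: Rmult_le_compat_l; lra.
rewrite -exp_plus; apply: exp_mono.
have -> : p * (49 / 50 - 1) * INR m = - (p * INR m) / 50 by field.
rewrite hpm. nra.
Qed.

Section PhiS.
Local Open Scope ring_scope.
Definition Phi (V : finType) (KS : {set {set V}}) (c1 c2 c3 x1 x2 x3 : R)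
  (f : {ffun {set V} -> bool}) : R :=
  \sum_(S in KS) \sum_(T in KS) (c1 * pow x1 (cnt f (AST S T)))
      + c2 * pow x2 (cnt f (A2 V)) + c3 * pow x3 (cnt f (A2 V)).

Lemma Phi_terms (V : finType) (KS : {set {set V}}) (c1 c2 c3 x1 x2 x3 : R) f :
  0 <= c1 -> 0 <= c2 -> 0 <= c3 -> 0 <= x1 -> 0 <= x2 -> 0 <= x3 ->
  [/\ forall S T, S \in KS -> T \in KS -> c1 * pow x1 (cnt f (AST S T)) <= Phi KS c1 c2 c3 x1 x2 x3 f,
      c2 * pow x2 (cnt f (A2 V)) <= Phi KS c1 c2 c3 x1 x2 x3 f &
      c3 * pow x3 (cnt f (A2 V)) <= Phi KS c1 c2 c3 x1 x2 x3 f].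
Proof.
move=> h1 h2 h3 g1 g2 g3.
have pw : forall x k, 0 <= x -> 0 <= pow x k by move=> x k hx; rewrite RpowE exprn_ge0.
have t1 : forall S T, 0 <= c1 * pow x1 (cnt f (AST S T)) by move=> S T; rewrite mulr_ge0 ?pw.
have s1 : 0 <= \sum_(S in KS) \sum_(T in KS) (c1 * pow x1 (cnt f (AST S T))).
  by apply: sumr_ge0 => S _; apply: sumr_ge0.
have t2 : 0 <= c2 * pow x2 (cnt f (A2 V)) by rewrite mulr_ge0 ?pw.
have t3 : 0 <= c3 * pow x3 (cnt f (A2 V)) by rewrite mulr_ge0 ?pw.
rewrite /Phi; split.
- move=> S T hS hT.
  apply: ler_wpDr t3 _; apply: ler_wpDr t2 _.
  rewrite (bigD1 S) //=; apply: ler_wpDr _ _.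
    by apply: sumr_ge0 => S' _; apply: sumr_ge0.
  rewrite (bigD1 T) //=; apply: ler_wpDr _ (lexx _).
  by apply: sumr_ge0.
- by apply: ler_wpDr t3 _; apply: ler_wpDl s1 (lexx _).
- by apply: ler_wpDl (addr_ge0 s1 t2) (lexx _).
Qed.
End PhiS.

Lemma twoC2 (N : nat) : 2 * INR 'C(N, 2) = INR N * (INR N - 1).
Proof.
case: N => [|N].
  have -> : 'C(0, 2) = 0%nat by []. simpl; lra.
have h := bin_ffact N.+1 2.
rewrite ffactnS ffactn1 in h.
have h2 : INR ('C(N.+1, 2) * 2) = INR (N.+1 * N) by rewrite -h.
have e2 : INR 2 = 2 by rewrite /=; lra.
rewrite !INR_muln e2 S_INR in h2. rewrite S_INR. lra.
Qed.

Lemma AST_real (V : finType) (S T : {set V}) (n : nat) : #|S| = n -> #|T| = n ->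
  INR #|AST S T| <= 1.5 * INR n ^ 2.
Proof.
move=> hS hT.
have h := card_AST S T; rewrite hS hT in h.
have h1 : INR #|AST S T| <= INR ('C(n, 2) + n * n) by apply: le_INR; apply/ssrnat.leP.
rewrite INR_addn INR_muln in h1.
have h2 := twoC2 n.
have : 0 <= INR n by apply: pos_INR.
nra.
Qed.

Lemma KS_card (M n : nat) : #|[set S : {set 'I_M} | #|S| == n]| = 'C(M, n).
Proof. by rewrite card_draws card_ord. Qed.

Lemma ind_le' (x K : R) (c : nat) : 0 < x -> 0 <= (INR c - K) * ln x ->
  1 <= exp (-(K * ln x)) * pow x c.
Proof. move=> h1 h2; rewrite Rmult_comm; exact: ind_le. Qed.

From Stdlib Require Import Classical.

Section Final.
Local Open Scope ring_scope.
Lemma exists_good (V : finType) (p : R) (Ph : {ffun {set V} -> bool} -> R) :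
  Rle 0 p -> Rle p 1 ->
  Rlt (\sum_(f : {ffun {set V} -> bool}) ww p f * Ph f) 1 ->
  exists f, ww p f <> 0 /\ Rlt (Ph f) 1.
Proof.
move=> p0 p1 hlt.
case: (classic (exists f, ww p f <> 0 /\ Rlt (Ph f) 1)) => // hno; exfalso.
have pp : 0 <= p <= 1 by apply/andP; split; apply/RleP.
have H : forall f, ww p f <= ww p f * Ph f.
  move=> f; case: (eqVneq (ww p f) 0) => [->|nz]; first by rewrite mul0r.
  have h1 : 1 <= Ph f.
    apply/RleP; apply: Rnot_lt_le => hl; apply: hno; exists f; split => //.
    by apply/eqP.
  rewrite -{1}(mulr1 (ww p f)); apply: ler_wpM2l => //; exact: ww_ge0.
have hle : \sum_(f : {ffun {set V} -> bool}) ww p f <= \sum_(f : {ffun {set V} -> bool}) ww p f * Ph f.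
  by apply: ler_sum => f _; exact: H.
rewrite ww_sum1 in hle; move/RleP: hle => hle.
exact: (Rlt_irrefl _ (Rle_lt_trans _ _ _ hle hlt)).
Qed.

Lemma sum_const_bound (V : finType) (KS : {set {set V}}) (F : {set V} -> {set V} -> R) (B : R) :
  (forall S T, S \in KS -> T \in KS -> Rle (F S T) B) ->
  Rle (\sum_(S in KS) \sum_(T in KS) F S T) (Rmult (Rmult (INR #|KS|) (INR #|KS|)) B).
Proof.
move=> hF; apply/RleP.
apply: (le_trans (y := \sum_(S in KS) \sum_(T in KS) B)).
  apply: ler_sum => S hS; apply: ler_sum => T hT; apply/RleP; exact: hF.
by rewrite sumr_const sumr_const !INRE !RmultE -mulrA mulr_natl mulr_natl.
Qed.
End Final.

Close Scope R_scope.

Theorem proposition2p1 :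
  forall r : nat, (2 <= r)%N ->
  exists N : nat, forall n : nat, (N <= n)%N ->
    exists E : {set {set 'I_(7 * r * n)}},
      simple_edges E /\
      (500 * ln (INR r) * INR (r ^ 2) * INR n < INR #|E|)%R /\
      (INR #|E| < 600 * ln (INR r) * INR (r ^ 2) * INR n)%R /\
      (forall S T : {set 'I_(7 * r * n)},
          [disjoint S & T] -> #|S| = n -> #|T| = n ->
          (INR #|edges_ST E S T| <= 70 * ln (INR r) * INR n)%R).
Proof.
move=> r hr; exists (22 * r)%nat => n hn.
Local Open Scope R_scope.
have hrR : 2 <= INR r.
  have h : INR 2 <= INR r by apply: le_INR; apply/ssrnat.leP.
  simpl in h; lra.
have hnR : 22 * INR r <= INR n.
  have h : INR (22 * r) <= INR n by apply: le_INR; apply/ssrnat.leP.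
  have e : INR 22 = 22 by simpl; lra.
  by rewrite INR_muln e in h.
rewrite !pow_INR.
set rr := INR r in hrR hnR *. set nn := INR n in hnR *.
have hL2 : 2/3 <= ln rr.
  apply: (Rle_trans _ _ _ ln2_ge); apply: ln_le'; lra.
have hLr : ln rr <= rr - 1 by apply: ln_le_sub1; lra.
set L := ln rr in hL2 hLr *.
have hn0 : 0 < nn by lra.
set p := 22 * L / nn.
have p0 : 0 <= p by apply: Rmult_le_pos; [lra | left; apply: Rinv_0_lt_compat].
have p1 : p <= 1.
  apply: (Rmult_le_reg_r nn) => //; rewrite /p /Rdiv Rmult_assoc Rinv_l; lra.
set KS := [set S : {set 'I_(7 * r * n)} | #|S| == n].
set c1 := exp (-(70 * L * nn * ln 2)).
set c2 := exp (-(600 * L * rr ^ 2 * nn * ln (21/20))).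
set c3 := exp (-(500 * L * rr ^ 2 * nn * ln (49/50))).
have hA2 : forall e : {set 'I_(7 * r * n)}, e \in A2 _ -> #|e| == 2%nat by move=> e; rewrite inE.
have hAST : forall (S T e : {set 'I_(7 * r * n)}), e \in AST S T -> #|e| == 2%nat.
  by move=> S T e; rewrite inE => /and3P [].
have hKS : forall S, S \in KS -> #|S| = n by move=> S; rewrite inE => /eqP.
have hN : INR (7 * r * n) = 7 * rr * nn.
  have e7 : INR 7 = 7 by simpl; lra.
  by rewrite !INR_muln e7.
have hC : INR #|KS| <= exp (nn * (ln 7 + 1 + L)).
  rewrite KS_card.
  have n0 : (0 < n)%nat by apply/ssrnat.ltP; apply: INR_lt; rewrite -/nn /=; lra.
  apply: (Rle_trans _ _ _ (binom_bound _ n0)).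
  rewrite -exp_pow_n hN; right; congr pow.
  rewrite !exp_plus -/nn /L (exp_ln 7); last lra.
  rewrite exp_ln; last lra. field; lra.
have X0 : forall S T, S \in KS -> T \in KS ->
    c1 * pow (1 + p * (2 - 1)) #|AST S T| <= exp (33 * L * nn - 70 * L * nn * ln 2).
  move=> S T hS hT.
  apply: T1 => //; first lra.
  by apply: AST_real; apply: hKS.
have X1 := @sum_const_bound _ KS (fun S T => c1 * pow (1 + p * (2 - 1)) #|AST S T|)
              (exp (33 * L * nn - 70 * L * nn * ln 2)) X0.
have X1' : INR #|KS| * INR #|KS| * exp (33 * L * nn - 70 * L * nn * ln 2) <= exp (- nn).
  apply: T1sum => //; apply: pos_INR.
have X2 : c2 * pow (1 + p * (21/20 - 1)) #|A2 'I_(7 * r * n)| <= exp (- nn).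
  apply: T2 => //.
  rewrite /A2 card_draws card_ord twoC2 hN.
  have : 0 <= 7 * rr * nn by nra. nra.
have X3 : c3 * pow (1 + p * (49/50 - 1)) #|A2 'I_(7 * r * n)| <= exp (- nn).
  apply: T3 => //.
  by rewrite /A2 card_draws card_ord twoC2 hN.
have e3 : 3 * exp (- nn) < 1.
  rewrite exp_Ropp; have := exp_ineq1 nn ltac:(lra); have := exp_pos nn => h1 h2.
  apply: (Rmult_lt_reg_r (exp nn)) => //. rewrite Rmult_assoc Rinv_l; lra.
have tot : Rlt (\big[GRing.add/GRing.zero]_(f : {ffun {set 'I_(7 * r * n)} -> bool})
     (GRing.mul (ww p f) (Phi KS c1 c2 c3 2 (21/20) (49/50) f))) 1.
  rewrite /Phi (@sum_phi _ p KS (@AST _) c1 c2 c3 2 (21/20) (49/50) (A2 _) hAST hA2).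
  apply: (Rle_lt_trans _ (exp (- nn) + exp (- nn) + exp (- nn))); last lra.
  apply: Rplus_le_compat; last exact: X3.
  apply: Rplus_le_compat; last exact: X2.
  exact: (Rle_trans _ _ _ X1 X1').
have [f [nz hPh]] := @exists_good _ p (Phi KS c1 c2 c3 2 (21/20) (49/50)) p0 p1 tot.
have c1p := introT (@RleP 0 c1) (Rlt_le _ _ (exp_pos _)).
have c2p := introT (@RleP 0 c2) (Rlt_le _ _ (exp_pos _)).
have c3p := introT (@RleP 0 c3) (Rlt_le _ _ (exp_pos _)).
have x1p := introT (@RleP 0 2) ltac:(lra).
have x2p := introT (@RleP 0 (21/20)) ltac:(lra).
have x3p := introT (@RleP 0 (49/50)) ltac:(lra).
have [P1 P2 P3] := Phi_terms KS f c1p c2p c3p x1p x2p x3p.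
have nz' : ww p f != 0 by apply/eqP.
set E := [set e | f e].
have hEA2 : [set e in A2 _ | f e] = E.
  apply/setP => e; rewrite !inE; case fe: (f e); rewrite ?andbF ?andbT //.
  exact: ww_supp nz' fe.
have hEST : forall S T, edges_ST E S T = [set e in AST S T | f e].
  move=> S T; apply/setP => e; rewrite /edges_ST !inE.
  case fe: (f e) => /=; last by rewrite andbF.
  by rewrite (ww_supp nz' fe) andbT.
have l2 : 0 < ln 2 by rewrite -ln_1; apply: ln_increasing; lra.
have l21 : 0 < ln (21/20) by rewrite -ln_1; apply: ln_increasing; lra.
have l49 : ln (49/50) < 0 by rewrite -ln_1; apply: ln_increasing; lra.
exists E; split; [|split; [|split]].
- by move=> e; rewrite inE => fe; apply/eqP; exact: (ww_supp nz' fe).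
- apply: Rnot_le_lt => hle.
  have h := @ind_le' (49/50) (500 * L * rr ^ 2 * nn) (cnt f (A2 'I_(7 * r * n))) ltac:(lra).
  have : 0 <= (INR (cnt f (A2 'I_(7 * r * n))) - 500 * L * rr ^ 2 * nn) * ln (49 / 50).
    by rewrite /cnt hEA2; nra.
  move=> /h {}h.
  have := P3; move/RleP => h3.
  have : 1 <= Phi KS c1 c2 c3 2 (21/20) (49/50) f.
    apply: (Rle_trans _ _ _ h); exact: h3.
  lra.
- apply: Rnot_le_lt => hle.
  have h := @ind_le' (21/20) (600 * L * rr ^ 2 * nn) (cnt f (A2 'I_(7 * r * n))) ltac:(lra).
  have : 0 <= (INR (cnt f (A2 'I_(7 * r * n))) - 600 * L * rr ^ 2 * nn) * ln (21 / 20).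
    by rewrite /cnt hEA2; nra.
  move=> /h {}h.
  have := P2; move/RleP => h3.
  have : 1 <= Phi KS c1 c2 c3 2 (21/20) (49/50) f.
    apply: (Rle_trans _ _ _ h); exact: h3.
  lra.
- move=> S T _ hS hT; apply: Rnot_lt_le => hlt.
  have h := @ind_le' 2 (70 * L * nn) (cnt f (AST S T)) ltac:(lra).
  have : 0 <= (INR (cnt f (AST S T)) - 70 * L * nn) * ln 2.
    by rewrite /cnt -hEST; nra.
  move=> /h {}h.
  have hS' : S \in KS by rewrite inE hS.
  have hT' : T \in KS by rewrite inE hT.
  have := P1 S T hS' hT'; move/RleP => h3.
  have : 1 <= Phi KS c1 c2 c3 2 (21/20) (49/50) f.
    apply: (Rle_trans _ _ _ h); exact: h3.
  lra.
Qed.
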